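(* Let $\alpha>0$, let $G$ be a standard normal random variable and let $G_\alpha:=\operatorname{sgn}(G)|G|^{2/\alpha}$. Then $\|G_\alpha\|_{\psi_\alpha}=(8/3)^{1/\alpha}$.
   Context: For a random variable $X$ and $\alpha>0$, $\|X\|_{\psi_\alpha}:=\inf\{K>0:\ \mathbb{E}\exp(|X/K|^\alpha)\le 2\}$ (with $\inf\emptyset=\infty$). $\operatorname{sgn}$ denotes the signum function. *)

(* Defs.v *)
From HB Require Import structures.
From mathcomp Require Import all_boot all_order all_algebra.
From mathcomp Require Import all_classical all_reals all_analysis.
Set Implicit Arguments. Unset Strict Implicit. Unset Printing Implicit Defensive.
Import Order.TTheory GRing.Theory Num.Theory.
Local Open Scope classical_set_scope.
Local Open Scope ring_scope.

(* The expectation is the (extended-real) integral of a nonnegative function,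
   hence always defined (possibly +oo). *)
Definition psi_norm {d : measure_display} {T : measurableType d} {R : realType}
  (P : probability T R) (alpha : R) (X : T -> R) : \bar R :=
  ereal_inf [set K%:E | K in
    [set K : R | 0 < K /\ ('E_P[(fun w => expR (`|X w / K| `^ alpha))%R] <= 2%:E)%E]].

Definition is_standard_normal {d : measure_display} {T : measurableType d}
  {R : realType} (P : probability T R) (G : {RV P >-> R}) : Prop :=
  forall A : set R, measurable A -> distribution P G A = normal_prob 0 1 A.

(* Main.v *)
Require Import Defs.
From HB Require Import structures.
From mathcomp Require Import all_boot all_order all_algebra.
From mathcomp Require Import all_classical all_reals all_analysis.
From mathcomp Require Import measurable_realfun ring lra.
Import Order.TTheory GRing.Theory Num.Theory.
Local Open Scope classical_set_scope.
Local Open Scope ring_scope.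

Section NormalCov.
Local Open Scope ereal_scope.
Lemma normal_cov (R : realType) (m s : R) (f : R -> \bar R) :
  (forall x, 0 <= f x) -> measurable_fun [set: R] f ->
  \int[normal_prob m s]_x f x =
  \int[lebesgue_measure]_x (f x * (normal_pdf m s x)%:E).
Proof.
move=> f0 mf.
have dom := normal_prob_dominates m s.
rewrite -(Radon_Nikodym_SigmaFinite.change_of_variables dom f0 measurableT mf).
apply: ae_eq_integral => //.
- apply: emeasurable_funM => //.
  exact: measurable_int (Radon_Nikodym_SigmaFinite.f_integrable dom).
- apply: emeasurable_funM => //; apply/measurable_EFinP.
  exact: measurable_normal_pdf.
apply: ae_eqe_mul2l.
apply: integral_ae_eq => //.
- exact: Radon_Nikodym_SigmaFinite.f_integrable dom.
- by apply/measurable_EFinP; exact: measurable_normal_pdf.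
move=> E _ mE.
by rewrite -Radon_Nikodym_SigmaFinite.f_integral.
Qed.
End NormalCov.

Lemma gauss_pt (R : realType) (t x : R) : t < 2^-1 ->
  expR (t * x ^+ 2) * normal_pdf 0 1 x =
  Num.sqrt (1 - 2 * t)^-1 * normal_pdf 0 (Num.sqrt (1 - 2 * t)^-1) x.
Proof.
move=> ht.
have h12 : 0 < 1 - 2 * t.
  by rewrite subr_gt0 -ltr_pdivlMl // mulrC mul1r.
set s := Num.sqrt _.
have s0 : 0 < s by rewrite sqrtr_gt0 invr_gt0.
have s2 : s ^+ 2 = (1 - 2 * t)^-1 by rewrite sqr_sqrtr // invr_ge0 ltW.
rewrite !normal_pdfE ?oner_neq0 ?gt_eqF //.
rewrite /normal_peak /normal_fun !subr0 expr1n mul1r s2.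
have -> : Num.sqrt ((1 - 2 * t)^-1 * pi *+ 2) = s * Num.sqrt (pi *+ 2).
  by rewrite -mulrnAr sqrtrM // invr_ge0 ltW.
rewrite invfM [RHS]mulrA [s * _]mulrA mulfV ?gt_eqF // mul1r.
rewrite mulrCA -expRD; congr (_ * expR _).
field.
by rewrite gt_eqF.
Qed.

Lemma mexp {R : realType} (t : R) :
  measurable_fun [set: R] (fun y : R => (expR (t * y ^+ 2))%:E).
Proof.
apply/measurable_EFinP; apply: measurableT_comp => //.
apply: measurable_funM => //; exact: measurable_funX.
Qed.

Section transfer.
Context {R : realType}.
Let idTR : measurableTypeR R -> R := idfun.
#[local] HB.instance Definition _ :=
  @isMeasurableFun.Build _ _ _ _ idTR (@measurable_id _ _ setT).

Lemma dist_normal_int d (T : measurableType d) (P : probability T R)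
  (G : {RV P >-> R}) (f : R -> \bar R) :
  is_standard_normal G -> measurable_fun [set: R] f -> (forall y, (0 <= f y)%E) ->
  (\int[distribution P G]_y f y = \int[normal_prob (0:R) 1]_y f y)%E.
Proof.
move=> hG mf f0.
transitivity (\int[distribution (normal_prob (0:R) 1) (idTR : {RV normal_prob (0:R) 1 >-> R})]_y f y)%E.
  apply: eq_measure_integral => A mA _.
  exact: hG.
exact: (ge0_integral_distribution (idTR : {RV normal_prob (0:R) 1 >-> R}) mf f0).
Qed.
End transfer.

Lemma Phi_eq d (T : measurableType d) (R : realType) (P : probability T R)
  (G : {RV P >-> R}) (t : R) :
  is_standard_normal G -> t < 2^-1 ->
  (\int[P]_w (expR (t * G w ^+ 2))%:E = (Num.sqrt (1 - 2*t)^-1)%:E)%E.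
Proof.
move=> hG ht.
have := ge0_integral_distribution G (mexp t).
rewrite /= => <-; last by move=> y; rewrite lee_fin expR_ge0.
rewrite dist_normal_int //; last exact: mexp.
rewrite normal_cov; last 2 first.
- by move=> y; rewrite lee_fin expR_ge0.
- exact: mexp.
have -> : (fun x => (expR (t * x ^+ 2))%:E * (normal_pdf 0 1 x)%:E)%E =
   (fun x => (Num.sqrt (1 - 2 * t)^-1)%:E * (normal_pdf 0 (Num.sqrt (1 - 2 * t)^-1) x)%:E)%E.
  by apply/funext => x; rewrite -!EFinM gauss_pt.
rewrite ge0_integralZl //.
- by rewrite integral_normal_pdf mule1.
- by apply/measurable_EFinP; exact: measurable_normal_pdf.
- by move=> y _; rewrite lee_fin normal_pdf_ge0.
Qed.

Lemma Phi_mono d (T : measurableType d) (R : realType) (P : probability T R)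
  (G : {RV P >-> R}) (t1 t2 : R) : t1 <= t2 ->
  (\int[P]_w (expR (t1 * G w ^+ 2))%:E <= \int[P]_w (expR (t2 * G w ^+ 2))%:E)%E.
Proof.
move=> t12; apply: ge0_le_integral => //.
all: try (by move=> w _; rewrite lee_fin expR_ge0).
- exact: (measurableT_comp (mexp t1) (measurable_funPT G)).
- exact: (measurableT_comp (mexp t2) (measurable_funPT G)).
by move=> w wT; rewrite lee_fin ler_expR ler_wpM2r // sqr_ge0.
Qed.

Lemma pt_eq (R : realType) (alpha K g : R) : 0 < alpha -> 0 < K ->
  `|Num.sg g * `|g| `^ (2 / alpha) / K| `^ alpha = (K `^ alpha)^-1 * g ^+ 2.
Proof.
move=> a0 K0.
have -> : `|Num.sg g * `|g| `^ (2 / alpha) / K| = `|g| `^ (2 / alpha) / K.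
  have [->|g0] := eqVneq g 0.
    by rewrite sgr0 normr0 powR0 ?mul0r ?normr0 // mulf_neq0 // invr_eq0 gt_eqF.
  rewrite normrM normrM normr_sg g0 mul1r ger0_norm ?powR_ge0 //.
  by rewrite ger0_norm // invr_ge0 ltW.
have Ka : 0 < K `^ alpha by rewrite powR_gt0.
have He : (`|g| `^ (2 / alpha) / K) `^ alpha * K `^ alpha = g ^+ 2.
  rewrite -powRM ?divr_ge0 ?powR_ge0 ?ltW // divfK ?gt_eqF //.
  by rewrite -powRrM divfK ?gt_eqF // powR_mulrn // real_normK // num_real.
by rewrite -He [RHS]mulrC mulfK ?gt_eqF.
Qed.

Lemma E_eq d (T : measurableType d) (R : realType) (P : probability T R)
  (G : {RV P >-> R}) (alpha K : R) : 0 < alpha -> 0 < K ->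
  ('E_P[(fun w => expR (`|(Num.sg (G w) * `|G w| `^ (2 / alpha)) / K| `^ alpha))%R] =
  \int[P]_w (expR ((K `^ alpha)^-1 * G w ^+ 2))%:E)%E.
Proof.
move=> a0 K0; rewrite unlock; apply: eq_integral => w _.
by rewrite pt_eq.
Qed.

Theorem mainTheorem4 (d : measure_display) (T : measurableType d) (R : realType)
  (P : probability T R) (G : {RV P >-> R}) (alpha : R) :
  0 < alpha ->
  is_standard_normal G ->
  psi_norm P alpha (fun w => Num.sg (G w) * `|G w| `^ (2 / alpha)) =
  ((8 / 3) `^ (1 / alpha))%:E.
Proof.
move=> a0 hG.
set c := (8 / 3) `^ (1 / alpha).
have c0 : 0 < c by rewrite powR_gt0.
have ca : c `^ alpha = 8 / 3.
  by rewrite -powRrM mulrC divfK ?gt_eqF // powRr1.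
rewrite /psi_norm; apply/eqP; rewrite eq_le; apply/andP; split.
  apply: ereal_inf_lbound; exists c => //; split => //.
  rewrite E_eq // ca Phi_eq //; last by lra.
  have -> : (1 - 2 * (8 / 3)^-1 : R)^-1 = 2 ^+ 2 by field.
  by rewrite sqrtr_sqr ger0_norm.
apply/ereal_infP => _ [K [K0 hK] <-].
rewrite lee_fin leNgt; apply/negP => Kc.
rewrite E_eq // in hK.
have Kac : K `^ alpha < 8 / 3.
  by rewrite -ca gt0_ltr_powR // nnegrE ltW.
have Ka : 0 < K `^ alpha by rewrite powR_gt0.
set t := (K `^ alpha)^-1 in hK.
have t38 : 3 / 8 < t.
  by rewrite /t -[3/8]invf_div ltf_pV2 // posrE divr_gt0.
set t' := Num.min t (7 / 16).
have t'le : t' <= t by rewrite /t' ge_min lexx.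
have t'a : 3 / 8 < t' by rewrite /t' lt_min t38 /=; lra.
have t'b : t' <= 7 / 16 by rewrite /t' ge_min lexx orbT.
have := @Phi_mono _ _ _ _ G _ _ t'le.
rewrite Phi_eq //; last by lra.
move=> h; have {h hK} := le_trans h hK.
rewrite lee_fin => hs.
have hpos : 0 < 1 - 2 * t' by lra.
have hx : 4 < (1 - 2 * t')^-1.
  rewrite -[4]invrK ltf_pV2 ?posrE //; lra.
have := sqr_sqrtr (ltW (lt_trans _ hx)).
have s0 := sqrtr_ge0 ((1 - 2 * t')^-1).
move: hs; set s := Num.sqrt _ => hs.
have := hx.
move=> hx' H; rewrite -H // in hx'.
have : 0 <= s by apply: sqrtr_ge0.
nra.
Qed.
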